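(* Let $G$ be a connected graph. The following are equivalent: (1) $G$ is bipartite; (2) $P_2\mid G$; (3) $G$ is not strongly disjoint from $P_2$; (4) $G$ is not weakly disjoint from $P_2$.
   Context: A weight function on finite $U$ is $\alpha:U\times U\to\mathbb{R}$, $\alpha\ge0$, symmetric, summing to $1$; degree $p(u)=\sum_{u'}\alpha(u,u')$; a graph is $(U,\alpha)$ with edges $(u,u')$ where $\alpha(u,u')>0$; connected means any two distinct vertices are joined by a path of edges; bipartite means $U=U_1\sqcup U_2$ with every edge joining $U_1$ to $U_2$. $P_2$ is the graph on $\{v_1,v_2\}$ with $\beta(v_1,v_2)=\beta(v_2,v_1)=1/2$, $\beta(v_i,v_i)=0$. For graphs $G=(U,\alpha)$, $H=(V,\beta)$ with degrees $p,q$, $H\mid G$ means there is a surjective $\phi:U\to V$ with (i) $q(v)=\sum_{u\in\phi^{-1}(v)}p(u)$, and (ii) $q(v)\sum_{u'\in\phi^{-1}(v')}\alpha(u,u')=p(u)\beta(v,v')$ for all $v,v'$, $u\in\phi^{-1}(v)$. A weight joining of $\alpha,\beta$ is a weight function $\gamma$ on $U\times V$ with degree $r(u,v)=\sum_{(u',v')}\gamma((u,v),(u',v'))$ such that $\sum_v r(u,v)=p(u)$, $\sum_u r(u,v)=q(v)$, $p(u)\sum_{\tilde v}\gamma((u,v),(u',\tilde v))=\alpha(u,u')r(u,v)$ and $q(v)\sum_{\tilde u}\gamma((u,v),(\tilde u,v'))=\beta(v,v')r(u,v)$. Strongly disjoint: the only weight joining is $\alpha\otimes\beta$, $(\alpha\otimes\beta)((u,v),(u',v'))=\alpha(u,u')\beta(v,v')$;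 weakly disjoint: every weight joining has degree $r(u,v)=p(u)q(v)$. *)

(* Defs.v *)
From HB Require Import structures.
From mathcomp Require Import all_boot all_order all_algebra.
Set Implicit Arguments. Unset Strict Implicit. Unset Printing Implicit Defensive.
Import Order.TTheory GRing.Theory Num.Theory.
Local Open Scope ring_scope.

Section Defs.
Variable R : realFieldType.

Definition weight_fun (U : finType) (alpha : U -> U -> R) : Prop :=
  [/\ forall u u', 0 <= alpha u u',
      forall u u', alpha u u' = alpha u' u
    & \sum_(u : U) \sum_(u' : U) alpha u u' = 1].

Definition deg (U : finType) (alpha : U -> U -> R) (u : U) : R :=
  \sum_(u' : U) alpha u u'.

Definition edge (U : finType) (alpha : U -> U -> R) : rel U :=
  fun u u' => 0 < alpha u u'.

Definition connected_graph (U : finType) (alpha : U -> U -> R) : Prop :=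
  forall u v : U, u != v ->
    exists s : seq U, path (edge alpha) u s /\ last u s = v.

(* bipartite: U = U1 ⊔ U2 (U2 = complement of U1) with every edge
   joining U1 to U2 *)
Definition bipartite (U : finType) (alpha : U -> U -> R) : Prop :=
  exists U1 : {set U}, forall u u', edge alpha u u' ->
    (u \in U1) != (u' \in U1).

(* the graph P_2 on {v1, v2} (encoded as bool) *)
Definition P2 (v v' : bool) : R := if v != v' then 1 / 2 else 0.

Definition gdivides (V U : finType) (beta : V -> V -> R) (alpha : U -> U -> R)
  : Prop :=
  exists phi : U -> V,
    [/\ forall v : V, exists u : U, phi u = v,
        forall v : V, deg beta v = \sum_(u | phi u == v) deg alpha u
      & forall (v v' : V) (u : U), phi u = v ->
          deg beta v * (\sum_(u' | phi u' == v') alpha u u')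
            = deg alpha u * beta v v'].

Definition weight_joining (U V : finType) (alpha : U -> U -> R)
  (beta : V -> V -> R) (gamma : (U * V)%type -> (U * V)%type -> R) : Prop :=
  [/\ weight_fun gamma,
      forall u : U, \sum_(v : V) deg gamma (u, v) = deg alpha u,
      forall v : V, \sum_(u : U) deg gamma (u, v) = deg beta v,
      forall (u u' : U) (v : V),
        deg alpha u * (\sum_(vt : V) gamma (u, v) (u', vt))
          = alpha u u' * deg gamma (u, v)
    & forall (u : U) (v v' : V),
        deg beta v * (\sum_(ut : U) gamma (u, v) (ut, v'))
          = beta v v' * deg gamma (u, v)].

Definition tensor (U V : finType) (alpha : U -> U -> R) (beta : V -> V -> R)
  (x y : (U * V)%type) : R := alpha x.1 y.1 * beta x.2 y.2.

Definition strongly_disjoint (U V : finType) (alpha : U -> U -> R)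
  (beta : V -> V -> R) : Prop :=
  forall gamma, weight_joining alpha beta gamma ->
    forall x y, gamma x y = tensor alpha beta x y.

Definition weakly_disjoint (U V : finType) (alpha : U -> U -> R)
  (beta : V -> V -> R) : Prop :=
  forall gamma, weight_joining alpha beta gamma ->
    forall (u : U) (v : V), deg gamma (u, v) = deg alpha u * deg beta v.

End Defs.

(* Main.v *)
Require Import Defs.
From HB Require Import structures.
From mathcomp Require Import all_boot all_order all_algebra.
From mathcomp Require Import ring lra.
From Stdlib Require Import Classical.
Set Implicit Arguments. Unset Strict Implicit. Unset Printing Implicit Defensive.
Import Order.TTheory GRing.Theory Num.Theory.
Local Open Scope ring_scope.

Section S.
Variable R : realFieldType.

Lemma degP2 v : deg (@P2 R) v = 1/2.
Proof. by rewrite /deg big_bool; case: v; rewrite /P2 /= ?addr0 ?add0r. Qed.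

Lemma deg_ge0 (U : finType) (a : U -> U -> R) u :
  (forall x y, 0 <= a x y) -> 0 <= deg a u.
Proof. by move=> h; apply: sumr_ge0 => *; exact: h. Qed.

Lemma deg_ge (U : finType) (a : U -> U -> R) u u' :
  (forall x y, 0 <= a x y) -> a u u' <= deg a u.
Proof. by move=> h; rewrite /deg (bigD1 u') //= lerDl; apply: sumr_ge0 => *; exact: h. Qed.

Lemma strong_weak (U V : finType) (a : U -> U -> R) (b : V -> V -> R) :
  strongly_disjoint a b -> weakly_disjoint a b.
Proof.
move=> hs g hg u v; rewrite /deg.
under eq_bigr => y _ do rewrite hs //.
rewrite /tensor -(pair_big xpredT xpredT (fun i j => a u i * b v j)) /=.
rewrite big_distrl /=; apply: eq_bigr => i _; by rewrite big_distrr.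
Qed.

Lemma exists_edge (U : finType) (a : U -> U -> R) :
  weight_fun a -> exists u u', 0 < a u u'.
Proof.
case=> h0 _ h1; apply: NNPP => hn.
have z : forall u u', a u u' = 0.
  move=> u u'; apply/eqP; rewrite eq_le h0 andbT leNgt; apply/negP => hp.
  by apply: hn; exists u, u'.
move: h1; under eq_bigr => u _ do under eq_bigr => u' _ do rewrite z.
by rewrite !big1 // => /eqP; rewrite eq_sym oner_eq0.
Qed.

Lemma bip_div (U : finType) (a : U -> U -> R) :
  weight_fun a -> bipartite a -> gdivides (@P2 R) a.
Proof.
move=> wa [U1 hU1]; have [h0 hs h1] := wa.
have z : forall u u', (u \in U1) = (u' \in U1) -> a u u' = 0.
  move=> u u' e; apply/eqP; rewrite eq_le h0 andbT leNgt; apply/negP => hp.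
  by have := hU1 _ _ hp; rewrite e eqxx.
pose phi := fun u => u \in U1.
have key : forall u v', \sum_(u' | phi u' == v') a u u' =
    if phi u == v' then 0 else deg a u.
  move=> u v'; case: eqP => e.
    by rewrite big1 // => u' /eqP e'; apply: z; rewrite /phi in e e'; rewrite e e'.
  rewrite /deg [RHS](bigID (fun u' => phi u' == v')) /=.
  rewrite [X in _ = _ + X]big1 ?addr0 //.
  move=> u' /eqP ne; apply: z; rewrite /phi in e ne.
  by move: e ne; case: (u \in U1); case: (u' \in U1); case: v'.
pose S v := \sum_(u | phi u == v) deg a u.
have Sflip : forall v, S v = S (~~ v).
  move=> v; rewrite /S.
  have -> : \sum_(u | phi u == v) deg a u =
            \sum_(u | phi u == v) \sum_(u' | phi u' == ~~ v) a u u'.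
    apply: eq_bigr => u /eqP e; rewrite key e; by case: v {e}.
  rewrite exchange_big /=; apply: eq_bigr => u' /eqP e.
  under eq_bigr => u _ do rewrite hs.
  by rewrite key e; case: v {e}.
have Ssum : S true + S false = 1.
  rewrite -h1 (bigID (fun u => phi u == true)) /=; congr (_ + _).
  by apply: eq_bigl => u; case: (phi u).
have Shalf : forall v, S v = 1/2.
  have e : S true = S false := Sflip true.
  by move=> v; case: v; lra.
exists phi; split.
- have [u [u' hp]] := exists_edge wa.
  have := hU1 _ _ hp => ne v.
  case: (boolP (phi u == v)) => [/eqP e|e]; first by exists u.
  by exists u'; move: ne e; rewrite /phi; case: (u \in U1); case: (u' \in U1); case: v.
- by move=> v; rewrite degP2 -/(S v) Shalf.
- move=> v v' u <-; rewrite degP2 key /P2.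
  by case: (phi u); case: v'; rewrite /= ?mulr0 ?mul0r // mulrC.
Qed.

Lemma sum_pair (U V : finType) (F : U * V -> R) :
  \sum_y F y = \sum_i \sum_j F (i, j).
Proof. by rewrite pair_big; apply: eq_big => [[]|[]]. Qed.

Lemma div_notweak (U : finType) (a : U -> U -> R) :
  weight_fun a -> gdivides (@P2 R) a -> ~ weakly_disjoint a (@P2 R).
Proof.
move=> wa [phi [hsurj hdeg hcond]] hw; have [h0 hs h1] := wa.
pose g := fun (x y : U * bool) =>
  if (x.2 == phi x.1) && (y.2 == phi y.1) then a x.1 y.1 else 0.
have rg : forall u v, deg g (u, v) = if v == phi u then deg a u else 0.
  move=> u v; rewrite /deg sum_pair /g /=.
  case: eqP => e /=; last by rewrite big1 // => i _; rewrite big1.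
  apply: eq_bigr => i _; rewrite big_bool /=.
  by case: (phi i); rewrite /= ?addr0 ?add0r.
have rsum : forall u, \sum_v deg g (u, v) = deg a u.
  by move=> u; rewrite big_bool !rg; case: (phi u); rewrite /= ?addr0 ?add0r.
have hj : weight_joining a (@P2 R) g.
  split.
  - split.
    + by move=> x y; rewrite /g; case: ifP.
    + by move=> x y; rewrite /g andbC hs.
    + rewrite -h1; rewrite (sum_pair (fun x => \sum_y g x y)).
      by apply: eq_bigr => u _; apply: rsum.
  - exact: rsum.
  - move=> v; rewrite hdeg [RHS]big_mkcond; apply: eq_bigr => u _.
    by rewrite rg eq_sym.
  - move=> u u' v; rewrite rg big_bool /g /=.
    by case: (v == phi u); case: (phi u'); rewrite /= ?addr0 ?add0r ?mulr0 ?mul0r // mulrC.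
  - move=> u v v'; rewrite rg /g /=.
    case: eqP => e /=; last by rewrite big1 ?mulr0.
    rewrite -big_mkcond /=.
    rewrite (eq_bigl (fun ut => phi ut == v')); last by move=> ut; rewrite eq_sym.
    by rewrite hcond // mulrC.
have [u [u' hp]] := exists_edge wa.
have pu : 0 < deg a u by apply: lt_le_trans hp (deg_ge _ _ h0).
have := hw g hj u (~~ phi u).
rewrite rg degP2; case: (phi u) => /=; lra.
Qed.

Lemma nbip_strong (U : finType) (a : U -> U -> R) :
  weight_fun a -> connected_graph a -> ~ bipartite a ->
  strongly_disjoint a (@P2 R).
Proof.
move=> wa hc hnb gam [[g0 gs g1] c2 c3 c4 c5]; have [h0 hs h1] := wa.
have F1 : forall u v ut, gam (u, v) (ut, v) = 0.
  move=> u v ut; have := c5 u v v; rewrite degP2 /P2 eqxx /= mul0r => e.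
  have e' : \sum_ut gam (u, v) (ut, v) = 0 by lra.
  by have := psumr_eq0P (fun i _ => g0 (u, v) (i, v)) e'; apply.
have F2 : forall u u' v,
    deg a u * gam (u, v) (u', ~~ v) = a u u' * deg gam (u, v).
  move=> u u' v; rewrite -c4 big_bool.
  by case: v; rewrite /= F1 ?addr0 ?add0r.
have F3 : forall u, deg gam (u, true) + deg gam (u, false) = deg a u.
  by move=> u; rewrite -c2 big_bool.
have F4 : forall x, 0 <= deg gam x by move=> x; apply: deg_ge0.
pose g u := deg gam (u, true) / deg a u.
have F5 : forall u u', 0 < a u u' -> g u' = 1 - g u.
  move=> u u' hp.
  have pu : 0 < deg a u by apply: lt_le_trans hp (deg_ge _ _ h0).
  have pu' : 0 < deg a u' by rewrite hs in hp; apply: lt_le_trans hp (deg_ge _ _ h0).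
  have e1 := F2 u u' true; have e2 := F2 u' u false.
  rewrite /= in e1 e2; rewrite gs [a u' u]hs in e2.
  have F3' := F3 u'.
  have An : a u u' != 0 by rewrite lt0r_neq0.
  have Pn : deg a u != 0 by rewrite lt0r_neq0.
  have Pn' : deg a u' != 0 by rewrite lt0r_neq0.
  have r1E : deg gam (u, true) = deg a u * gam (u, true) (u', false) / a u u'.
    by rewrite e1 [a u u' * _]mulrC mulfK.
  have r2E : deg gam (u', false) = deg a u' * gam (u, true) (u', false) / a u u'.
    by rewrite e2 [a u u' * _]mulrC mulfK.
  have r1E' : deg gam (u', true) = deg a u' - deg gam (u', false) by lra.
  rewrite /g r1E' r2E r1E; field.
  by rewrite An Pn Pn'.
have F6 : forall u, g u = 1/2.
  move=> u0; apply: NNPP => hne; apply: hnb.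
  have all : forall u, g u <> 1/2.
    move=> u; case: (eqVneq u0 u) => [<-|ne] //.
    have [s [hpth hl]] := hc _ _ ne; rewrite -hl.
    elim: s u0 hne hpth {hl ne} => [|x s IH] y hy //=.
    move/andP=> [hyx hpth]; apply: IH hpth.
    by rewrite (F5 _ _ hyx) => hx; apply: hy; lra.
  exists [set u | 1/2 < g u] => u u' hp; rewrite !inE (F5 _ _ hp).
  have hne' := all u.
  have [h|h] := ltP (1/2) (g u); have [h'|h'] := ltP (1/2) (1 - g u) => //=;
    first [lra | (exfalso; apply: hne'; lra)].
move=> [u v] [u' v']; rewrite /tensor /=.
have pu0 : 0 <= deg a u by apply: deg_ge0.
case: (eqVneq (deg a u) 0) => [pz|pn].
  have au : a u u' = 0.
    by apply/eqP; rewrite eq_le h0 andbT -pz; apply: deg_ge.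
  have ru : deg gam (u, v) = 0.
    have := F3 u; have := F4 (u, true); have := F4 (u, false).
    by case: v; lra.
  rewrite au mul0r.
  by have := psumr_eq0P (fun i _ => g0 (u, v) i) ru; apply.
have e := F6 u; rewrite /g in e.
have r1 : deg gam (u, true) = deg a u / 2.
  by rewrite -(divfK pn (deg gam (u, true))) e; field.
have rv : deg gam (u, v) = deg a u / 2.
  by case: v; last (have := F3 u; rewrite r1 => ?); lra.
case: (eqVneq v' v) => [->|nv].
  by rewrite F1 /P2 eqxx /= mulr0.
have -> : v' = ~~ v by destruct v, v'; move: nv.
apply: (mulfI pn); rewrite F2 rv /P2.
have -> : (v != ~~ v) = true by destruct v.
by field.
Qed.

End S.

Unset Implicit Arguments.

Theorem proposition7p1 (R : realFieldType) (U : finType) (alpha : U -> U -> R) :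
  weight_fun alpha -> connected_graph alpha ->
  [<-> bipartite alpha;
       gdivides (@P2 R) alpha;
       ~ strongly_disjoint alpha (@P2 R);
       ~ weakly_disjoint alpha (@P2 R)].
Proof.
move=> wa hc.
have A : bipartite alpha -> ~ weakly_disjoint alpha (@P2 R).
  by move=> hb; apply: div_notweak => //; apply: bip_div.
have B : ~ strongly_disjoint alpha (@P2 R) -> bipartite alpha.
  by move=> hns; apply: NNPP => hnb; apply: hns; apply: nbip_strong.
tfae.
- exact: bip_div.
- by move=> hd hs; apply: (div_notweak wa hd); apply: strong_weak.
- by move=> hns; apply: A; apply: B.
- move=> hnw; apply: B => hs; apply: hnw; exact: strong_weak.
Qed.
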